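(* Let $\tilde Q\subseteq\mathfrak P$ be an independent set, let $\tilde S\subseteq\mathfrak P$, let $(a,b)$ with $a,b\in\mathcal G(\tilde Q)$ be a conjugal pair in relation to $\tilde S$, and let $o$ be a Pauli operator with $o\in G_{\tilde Q}(a)\cup G_{\tilde Q}(b)$. Then there exists a pair $(c,d)$ such that (1) $c,d\in\mathcal G(\tilde Q)$; (2) $o\in G_{\tilde Q}(c)$; (3) $o\notin G_{\tilde Q}(d)$; (4) $(c,d)$ is a conjugal pair in relation to $(\tilde S\setminus\{a,b\})\cup\{c,d\}$; and (5) $\mathcal G(\{c,d\})=\mathcal G(\{a,b\})$.
   Context: $\mathfrak P$ is the group of $N$-qubit Pauli operators modulo phases; $\mathcal G(T)$ is the set of all products of elements of $T$. A set is independent if no element is a product of other elements of the set. For an independent set $\tilde Q$ and $q\in\mathcal G(\tilde Q)$, $G_{\tilde Q}(q)\subseteq\tilde Q$ is the unique subset whose product equals $q$. A pair $(a,b)$ is a conjugal pair in relation to a set $X$ if each of $a,b$ commutes with every operator in $X$ except its partner (the other member of the pair), should the partner lie in $X$. *)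

(* Defs.v *)
From mathcomp Require Import all_boot.
Set Implicit Arguments. Unset Strict Implicit. Unset Printing Implicit Defensive.

(* A single-qubit Pauli modulo phase is encoded by its (x,z) bits:
   I = (false,false), X = (true,false), Z = (false,true), Y = (true,true).
   An N-qubit Pauli modulo phases is a tensor product of these. *)
Definition Pauli (N : nat) := {ffun 'I_N -> bool * bool}.

Definition pmul N (p q : Pauli N) : Pauli N :=
  [ffun i => (((p i).1 (+) (q i).1), ((p i).2 (+) (q i).2))].

Definition pone N : Pauli N := [ffun _ => (false, false)].

Definition anticomm1 (u v : bool * bool) : bool :=
  (u.1 && v.2) (+) (u.2 && v.1).

Definition pcommute N (p q : Pauli N) : bool :=
  ~~ odd #|[set i : 'I_N | anticomm1 (p i) (q i)]|.

Definition prodP N (A : {set Pauli N}) : Pauli N :=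
  \big[@pmul N/@pone N]_(t in A) t.

Definition gen N (T : {set Pauli N}) : {set Pauli N} :=
  [set prodP A | A in powerset T].

Definition independent N (T : {set Pauli N}) : bool :=
  [forall x in T, x \notin gen (T :\ x)].

(* G_Q(q): the subset of Q whose product is q (unique when Q is independent
   and q \in gen Q); defaults to set0 when no such subset exists. *)
Definition decomp N (Q : {set Pauli N}) (q : Pauli N) : {set Pauli N} :=
  odflt set0 [pick A : {set Pauli N} | (A \subset Q) && (prodP A == q)].

Definition conjugal_pair N (a b : Pauli N) (X : {set Pauli N}) : Prop :=
  (forall x, x \in X -> x != b -> pcommute a x) /\
  (forall x, x \in X -> x != a -> pcommute b x).

(* Main.v *)
Require Import Defs.
From HB Require Import structures.
From mathcomp Require Import all_boot.
Set Implicit Arguments. Unset Strict Implicit.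

Section P.
Variable N : nat.
Local Notation P := (Pauli N).

Lemma pmulA : associative (@pmul N).
Proof. by move=> p q r; apply/ffunP => i; rewrite !ffunE /= !addbA. Qed.
Lemma pmulC : commutative (@pmul N).
Proof. by move=> p q; apply/ffunP => i; rewrite !ffunE /= [_.1 (+) _]addbC [_.2 (+) _]addbC. Qed.
Lemma pmul1 : left_id (@pone N) (@pmul N).
Proof. by move=> p; apply/ffunP => i; rewrite !ffunE /=; case: (p i). Qed.
Lemma pmulxx (p : P) : pmul p p = pone N.
Proof. by apply/ffunP => i; rewrite !ffunE /= !addbb. Qed.

HB.instance Definition _ := Monoid.isComLaw.Build P (pone N) (@pmul N) pmulA pmulC pmul1.

Lemma prodP_sym (A B : {set P}) :
  pmul (prodP A) (prodP B) = prodP ((A :\: B) :|: (B :\: A)).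
Proof.
rewrite /prodP (big_setID (A:=A) B) (big_setID (A:=B) A) (big_setID (A:=(A :\: B) :|: (B :\: A)) B).
have -> : (A :\: B :|: B :\: A) :&: B = B :\: A.
  by apply/setP => x; rewrite !inE; case: (x \in A); case: (x \in B).
have -> : (A :\: B :|: B :\: A) :\: B = A :\: B.
  by apply/setP => x; rewrite !inE; case: (x \in A); case: (x \in B).
rewrite setIC.
set u := \big[_/_]_(i in B :&: A) i.
set v := \big[_/_]_(i in A :\: B) i.
set w := \big[_/_]_(i in B :\: A) i.
rewrite /=; rewrite -pmulA (pmulC v) -pmulA pmulA pmulxx pmul1 pmulC //.
Qed.

Lemma odd_card (f : 'I_N -> bool) :
  odd #|[set i | f i]| = \big[addb/false]_i f i.
Proof.
rewrite cardsE -sum1_card big_mkcond /=.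
rewrite (big_morph odd oddD (erefl (odd 0))).
by apply: eq_bigr => i _; rewrite unfold_in; case: (f i).
Qed.

Lemma pcommuteM (p q x : P) :
  pcommute (pmul p q) x = (pcommute p x == pcommute q x).
Proof.
rewrite /pcommute !odd_card.
rewrite (eq_bigr (fun i => anticomm1 (p i) (x i) (+) anticomm1 (q i) (x i))).
  by rewrite big_split /=; case: (\big[_/_]_i _); case: (\big[_/_]_i _).
move=> i _; rewrite ffunE /anticomm1 /=.
by case: (p i) => [[] []]; case: (q i) => [[] []]; case: (x i) => [[] []].
Qed.

Lemma pcommutexx (p : P) : pcommute p p.
Proof.
rewrite /pcommute (_ : [set i | _] = set0) ?cards0 //.
by apply/setP => i; rewrite !inE /anticomm1; case: (p i) => [[] []].
Qed.


Lemma prodP_uniq (Q A B : {set P}) : independent Q ->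
  A \subset Q -> B \subset Q -> prodP A = prodP B -> A = B.
Proof.
move=> /forallP indQ sAQ sBQ eAB.
set D := (A :\: B) :|: (B :\: A).
have pD : prodP D = pone N by rewrite -prodP_sym eAB pmulxx.
case: (set_0Vmem D) => [D0|[x xD]].
  apply/eqP; rewrite eqEsubset -!setD_eq0 -!subset0.
  by rewrite -D0 subsetUl subsetUr.
have xQ : x \in Q.
  move: xD; rewrite !inE => /orP[/andP[_ xA]|/andP[_ xB]].
    exact: (subsetP sAQ). exact: (subsetP sBQ).
exfalso; move: (indQ x); rewrite xQ /= => /negP; apply.
apply/imsetP; exists (D :\ x).
  rewrite inE; apply/subsetP => y; rewrite !inE => /andP[-> yD] /=.
  case/orP: yD => [/andP[_ yA]|/andP[_ yB]].
    exact: (subsetP sAQ). exact: (subsetP sBQ).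
move: pD; rewrite /prodP (big_setD1 _ xD) /= => h.
have := f_equal (pmul x) h; rewrite pmulA pmulxx pmul1 => ->.
by rewrite pmulC pmul1.
Qed.

Lemma decompE (Q A : {set P}) : independent Q -> A \subset Q ->
  decomp Q (prodP A) = A.
Proof.
move=> iQ sAQ; rewrite /decomp; case: pickP => [B /andP[sBQ /eqP e]|/(_ A)] /=.
  exact: prodP_uniq iQ sBQ sAQ e.
by rewrite sAQ eqxx.
Qed.

Lemma genP (Q : {set P}) q : q \in gen Q ->
  exists2 A : {set P}, A \subset Q & q = prodP A.
Proof. by case/imsetP => A; rewrite inE => sAQ ->; exists A. Qed.

Lemma prodP0 : prodP (set0 : {set P}) = pone N.
Proof. by rewrite /prodP big_set0. Qed.
Lemma prodP1 (x : P) : prodP [set x] = x.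
Proof. by rewrite /prodP big_set1. Qed.
Lemma prodP2 (x y : P) : prodP [set x; y] = if x == y then x else pmul x y.
Proof.
case: eqP => [->|/eqP nxy]; first by rewrite setUid prodP1.
by rewrite /prodP big_setU1 ?inE // big_set1.
Qed.

Lemma gen2 (x y : P) : gen [set x; y] = [set pone N; x; y; pmul x y].
Proof.
apply/setP => z; apply/idP/idP.
  case/imsetP => A; rewrite inE => sA ->.
  have [xA|xA] := boolP (x \in A); have [yA|yA] := boolP (y \in A).
  - have -> : A = [set x; y].
      apply/eqP; rewrite eqEsubset sA; apply/subsetP => w; rewrite !inE.
      by case/orP => /eqP ->.
    rewrite prodP2; case: eqP => [->|_]; rewrite !inE eqxx ?orbT //.
  - have -> : A = [set x].
      apply/setP => w; rewrite !inE; apply/idP/idP => [wA|/eqP -> //].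
      by move: (subsetP sA w wA); rewrite !inE => /orP[//|/eqP e]; rewrite -e wA in yA.
    by rewrite prodP1 !inE eqxx ?orbT.
  - have -> : A = [set y].
      apply/setP => w; rewrite !inE; apply/idP/idP => [wA|/eqP -> //].
      by move: (subsetP sA w wA); rewrite !inE => /orP[/eqP e|//]; rewrite -e wA in xA.
    by rewrite prodP1 !inE eqxx ?orbT.
  - have -> : A = set0.
      apply/setP => w; rewrite !inE; apply/negbTE/negP => wA.
      move: (subsetP sA w wA); rewrite !inE => /orP[]/eqP e; [by rewrite -e wA in xA | by rewrite -e wA in yA].
    by rewrite prodP0 !inE eqxx.
rewrite !inE -!orbA => /or4P[]/eqP ->; apply/imsetP.
- by exists set0; rewrite ?inE ?sub0set ?prodP0.
- by exists [set x]; rewrite ?prodP1 // inE sub1set !inE eqxx.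
- by exists [set y]; rewrite ?prodP1 // inE sub1set !inE eqxx orbT.
- case: (eqVneq x y) => [<-|nxy]; first by exists set0; rewrite ?inE ?sub0set ?prodP0 ?pmulxx.
  by exists [set x; y]; rewrite ?inE ?subxx // prodP2 (negbTE nxy).
Qed.

End P.

Unset Implicit Arguments.
Theorem lemma4 (N : nat) (Q S : {set Pauli N}) (a b o : Pauli N) :
  independent Q ->
  a \in gen Q -> b \in gen Q ->
  conjugal_pair a b S ->
  o \in decomp Q a :|: decomp Q b ->
  exists c d : Pauli N,
    [/\ c \in gen Q /\ d \in gen Q,
        o \in decomp Q c,
        o \notin decomp Q d,
        conjugal_pair c d ((S :\: [set a; b]) :|: [set c; d])
      & gen [set c; d] = gen [set a; b]].
Proof.
move=> iQ aQ bQ [ca cb] oab.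
case: (genP aQ) => A sA ea; case: (genP bQ) => B sB eb.
have dA : decomp Q a = A by rewrite ea decompE.
have dB : decomp Q b = B by rewrite eb decompE.
rewrite dA dB inE in oab.
have [oA|oA] := boolP (o \in A); have [oB|oB] := boolP (o \in B).
- have eab : pmul a b = prodP (A:\:B :|: B:\:A) by rewrite ea eb prodP_sym.
  have sD : A:\:B :|: B:\:A \subset Q.
    by rewrite subUset (subset_trans (subsetDl _ _) sA) (subset_trans (subsetDl _ _) sB).
  exists a, (pmul a b); split.
  + split=> //; apply/imsetP; exists (A:\:B :|: B:\:A) => //; by rewrite inE.
  + by rewrite dA.
  + by rewrite eab decompE // !inE oA oB.
  + split => x; rewrite !inE.
    * case/orP => [/andP[/norP[xa xb] xS]|/orP[/eqP->|/eqP->]] nd.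
      - exact: ca.
      - exact: pcommutexx.
      - by rewrite eqxx in nd.
    * case/orP => [/andP[/norP[xa xb] xS]|/orP[/eqP->|/eqP->]] nd.
      - by rewrite pcommuteM ca // cb.
      - by rewrite eqxx in nd.
      - exact: pcommutexx.
  + rewrite !gen2 pmulA pmulxx pmul1; apply/setP => z; rewrite !inE.
    by case: (z == pone N); case: (z == a); case: (z == b); case: (z == pmul a b).
- exists a, b; split => //; first by rewrite dA.
  + by rewrite dB.
  + split => x; rewrite !inE.
    * case/orP => [/andP[/norP[xa xb] xS]|/orP[/eqP->|/eqP->]] nd.
      - exact: ca.
      - exact: pcommutexx.
      - by rewrite eqxx in nd.
    * case/orP => [/andP[/norP[xa xb] xS]|/orP[/eqP->|/eqP->]] nd.
      - exact: cb.
      - by rewrite eqxx in nd.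
      - exact: pcommutexx.
- exists b, a; split => //; first by rewrite dB.
  + by rewrite dA.
  + split => x; rewrite !inE.
    * case/orP => [/andP[/norP[xa xb] xS]|/orP[/eqP->|/eqP->]] nd.
      - exact: cb.
      - exact: pcommutexx.
      - by rewrite eqxx in nd.
    * case/orP => [/andP[/norP[xa xb] xS]|/orP[/eqP->|/eqP->]] nd.
      - exact: ca.
      - by rewrite eqxx in nd.
      - exact: pcommutexx.
  + rewrite !gen2 pmulC; apply/setP => z; rewrite !inE.
    by case: (z == pone N); case: (z == a); case: (z == b); case: (z == pmul a b).
- by move: oab; rewrite (negbTE oA) (negbTE oB).
Qed.
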